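(* Let $G=\prod_{i=1}^t K_{n_i}$ with all $n_i\ge 2$, and regard $\{0,1\}^t\subseteq V(G)$. Let $M\subseteq\{0,1\}^t$ be a set such that no two distinct vectors in $M$ agree in exactly $t-1$ coordinates, and no two vectors in $M$ differ in all $t$ coordinates. Then $\{0,1\}^t\setminus M$ is a dominating set of $G$.
   Context: $K_m$ is the complete graph on $m$ vertices; vertices of the direct product $\prod_{i=1}^t K_{n_i}$ are tuples $(x_1,\dots,x_t)$ with $x_i\in\{0,\dots,n_i-1\}$, two tuples being adjacent iff they differ in every coordinate. A set $D$ is dominating if every vertex is in $D$ or adjacent to a vertex of $D$. *)

(* Defs.v *)
From mathcomp Require Import all_boot.
Set Implicit Arguments. Unset Strict Implicit. Unset Printing Implicit Defensive.

Definition is_vertex (t : nat) (n : 'I_t -> nat) (x : 'I_t -> nat) : Prop :=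
  forall i, x i < n i.

(* Adjacency in the direct product of complete graphs: differ in every coordinate. *)
Definition prodK_adj (t : nat) (x y : 'I_t -> nat) : Prop :=
  forall i, x i <> y i.

Definition dominating (t : nat) (n : 'I_t -> nat) (D : ('I_t -> nat) -> Prop) : Prop :=
  (forall x, D x -> is_vertex n x) /\
  forall x, is_vertex n x -> D x \/ exists y, D y /\ prodK_adj x y.

Definition bin_vertex (t : nat) (b : {ffun 'I_t -> bool}) : 'I_t -> nat :=
  fun i => nat_of_bool (b i).

Definition agree (t : nat) (a b : {ffun 'I_t -> bool}) : nat :=
  #|[set i | a i == b i]|.

(* Main.v *)
Require Import Defs.
From Stdlib Require Import FunctionalExtensionality.
From mathcomp Require Import all_boot.

Theorem theorem4p4 (t : nat) (n : 'I_t -> nat) (hn : forall i, 2 <= n i)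
  (M : {set {ffun 'I_t -> bool}})
  (hM1 : forall a b, a \in M -> b \in M -> a != b -> agree a b <> t.-1)
  (hM2 : forall a b, a \in M -> b \in M -> agree a b <> 0) :
  dominating n (fun x => exists2 b : {ffun 'I_t -> bool}, b \notin M & x = bin_vertex b).
Proof.
split.
  move=> x [b _ ->] i; rewrite /bin_vertex; apply: leq_ltn_trans (hn i).
  by case: (b i).
move=> x hx.
case: (boolP [forall i, x i <= 1]) => [/forallP hb | /forallP hnb].
  pose b := [ffun i => x i == 1].
  have xb : x = bin_vertex b.
    apply: functional_extensionality => i; rewrite /bin_vertex ffunE.
    by move: (hb i); case: (x i) => [|[|]].
  case: (boolP (b \in M)) => hbM; last by left; exists b.
  right; pose c := [ffun i => ~~ b i]; exists (bin_vertex c); split.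
    exists c => //. apply/negP => hc; apply: (hM2 b c hbM hc).
    rewrite /agree (_ : [set i | b i == c i] = set0) ?cards0 //.
    by apply/setP => i; rewrite !inE /c ffunE; case: (b i).
  move=> i; rewrite /bin_vertex /c /b !ffunE; move: (hb i); by case: (x i) => [|[|]].
have [j hj] : exists j, ~~ (x j <= 1).
  by apply/existsP; rewrite -negb_forall; apply/forallP.
pose c := [ffun i => x i == 0].
pose c' := [ffun i => if i == j then ~~ c i else c i].
have adj : forall d : {ffun 'I_t -> bool}, (forall i, i != j -> d i = c i) ->
    prodK_adj x (bin_vertex d).
  move=> d hd i; rewrite /bin_vertex.
  case: (eqVneq i j) => [->|/hd ->].
    by move: hj; case: (x j) => [|[|]] //; case: (d j).
  by rewrite ffunE; case: (x i) => [|[|]].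
right.
case: (boolP (c \in M)) => hcM.
  exists (bin_vertex c'); split; last first.
    by apply: adj => i /negbTE hi; rewrite ffunE hi.
  exists c' => //. apply/negP => hc'.
  apply: (hM1 c c' hcM hc').
    by apply/eqP => /(congr1 (fun f : {ffun _ -> bool} => f j)); rewrite /c' ffunE eqxx; case: (c j).
  rewrite /agree (_ : [set i | c i == c' i] = [set~ j]) ?cardsC1 ?card_ord //.
  apply/setP => i; rewrite !inE /c' ffunE; case: (eqVneq i j) => [->|] /=.
    by case: (c j).
  by rewrite eqxx.
exists (bin_vertex c); split; first by exists c.
by apply: adj.
Qed.
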